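(* Let $p\ge 3$ be prime and $q=p^r>3$. Then for every $n\ge 1$ there exists a local permutation polynomial $f\in\mathbb{F}_q[x_1,\dots,x_n]$ of degree $n(q-2)$.
   Context: $\mathbb{F}_q$ is the finite field with $q$ elements. A polynomial $f\in\mathbb{F}_q[x_1,\dots,x_n]$ is a local permutation polynomial (LPP) if, for each $i$ and each choice of the other coordinates $(a_j)_{j\ne i}\in\mathbb{F}_q^{n-1}$, the univariate polynomial in $x_i$ obtained by fixing $x_j=a_j$ for $j\ne i$ induces a bijection of $\mathbb{F}_q$. Polynomials are reduced (degree $<q$ in each variable), and degree means total degree. *)

(* Defs.v *)
From HB Require Import structures.
From mathcomp Require Import all_boot all_order all_algebra.
From mathcomp Require Import mpoly.
Set Implicit Arguments. Unset Strict Implicit. Unset Printing Implicit Defensive.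
Import GRing.Theory.
Local Open Scope ring_scope.

(* total degree (msize p = 1 + total degree, and 0 for p = 0) *)
Definition tdeg (F : nzRingType) (n : nat) (f : {mpoly F[n]}) : nat := (msize f).-1.

Definition reduced_mpoly (F : finFieldType) (n : nat) (f : {mpoly F[n]}) : Prop :=
  forall m, m \in msupp f -> forall i : 'I_n, (m i < #|F|)%N.

Definition is_LPP (F : finFieldType) (n : nat) (f : {mpoly F[n]}) : Prop :=
  forall (i : 'I_n) (a : 'I_n -> F),
    bijective (fun c : F => f.@[fun j : 'I_n => if j == i then c else a j]).

(* Main.v *)
Require Import Defs.
From HB Require Import structures.
From mathcomp Require Import all_boot all_order all_algebra.
From mathcomp Require Import mpoly.
Local Open Scope ring_scope.
From mathcomp Require Import all_field.
From mathcomp Require Import ring zify.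
Set Implicit Arguments. Unset Strict Implicit. Unset Printing Implicit Defensive.
Import GRing.Theory.

Section Sums.
Variable F : finFieldType.
Hypothesis hq : (3 < #|F|)%N.
Hypothesis hqz : (#|F|)%:R = 0 :> F.
Hypothesis h2 : (2 : F) != 0.

Lemma exists_c : exists c : F, [/\ c != 0, c != 1 & c != -1].
Proof.
case: (boolP [exists c : F, [&& c != 0, c != 1 & c != -1]]); last first.
  move=> /existsPn H; exfalso.
  have : (#|F| <= 3)%N.
    apply: leq_trans (card_size [:: (0:F); 1; -1]).
    apply/subset_leq_card/subsetP => x _.
    move: (H x); rewrite !inE !negb_and !negbK.
    by case/or3P => /eqP ->; rewrite eqxx ?orbT.
  by rewrite leqNgt hq.
by case/existsP => c /and3P[? ? ?]; exists c.
Qed.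

Lemma sum_id : \sum_(v : F) v = 0.
Proof.
have [c [c0 c1 _]] := exists_c.
have E : \sum_(v : F) v = c * \sum_(v : F) v.
  rewrite mulr_sumr; exact: (reindex_inj (mulfI c0)).
have : (c - 1) * \sum_(v : F) v = 0 by rewrite mulrBl -E mul1r subrr.
by move/eqP; rewrite mulf_eq0 subr_eq0 (negbTE c1) /= => /eqP.
Qed.

Lemma sum_inj (g : F -> F) : injective g -> \sum_(v : F) g v = 0.
Proof.
move=> ig; transitivity (\sum_(v : F) v); last exact: sum_id.
by rewrite [in RHS](reindex_inj ig).
Qed.

Lemma sum_inv : \sum_(v : F) v^-1 = 0.
Proof. exact: sum_inj invr_inj. Qed.

Lemma sum_sq : \sum_(v : F) v ^+ 2 = 0.
Proof.
have [c [c0 c1 c2]] := exists_c.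
have E : \sum_(v : F) v ^+ 2 = c ^+ 2 * \sum_(v : F) v ^+ 2.
  rewrite mulr_sumr (reindex_inj (mulfI c0)) /=.
  by apply: eq_bigr => v _; rewrite exprMn.
have : (c ^+ 2 - 1) * \sum_(v : F) v ^+ 2 = 0 by rewrite mulrBl -E mul1r subrr.
move/eqP; rewrite mulf_eq0 => /orP[|/eqP //].
rewrite subr_sqr_1 mulf_eq0 subr_eq0 addr_eq0 (negbTE c1) (negbTE c2) //.
Qed.

Lemma sum_invsq : \sum_(v : F) v^-1 ^+ 2 = 0.
Proof.
by rewrite (reindex_inj invr_inj) /=; under eq_bigr do rewrite invrK; exact: sum_sq.
Qed.

Lemma sum_mulinv : \sum_(v : F) v * v^-1 = -1.
Proof.
have E : forall v : F, v * v^-1 = 1 - (v == 0)%:R.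
  move=> v; case: (eqVneq v 0) => [->|v0]; first by rewrite mul0r subrr.
  by rewrite mulfV // subr0.
under eq_bigr do rewrite E.
rewrite sumrB sumr_const.
rewrite (bigD1 0) //= eqxx big1 ?addr0; last by move=> v /negbTE ->.
by rewrite -[1 *+ _]/(_%:R) hqz sub0r.
Qed.


Lemma g_lemma (t : F) : \sum_(s : F) s^-1 * (t + s)^-1 = 2 * t^-1 ^+ 2.
Proof.
case: (eqVneq t 0) => [->|t0].
  rewrite invr0 expr0n /= mulr0.
  under eq_bigr do rewrite add0r -expr2.
  exact: sum_invsq.
have E : forall s : F, s^-1 * (t + s)^-1 =
   t^-1 * (s^-1 - (t + s)^-1) + t^-1 ^+ 2 * ((s == 0)%:R + (s == - t)%:R).
  move=> s; case: (eqVneq s 0) => [->|s0].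
    rewrite eq_sym oppr_eq0 (negbTE t0) invr0 !addr0 /=; ring.
  case: (eqVneq s (- t)) => [->|st].
    rewrite subrr invr0 invrN /=; ring.
  have ts : t + s != 0.
    by apply: contra st; rewrite addrC addr_eq0.
  rewrite !addr0 mulr0 addr0.
  by field; rewrite ts s0 t0.
under eq_bigr do rewrite E.
rewrite big_split /= -!mulr_sumr sumrB big_split /= sum_inv.
have -> : \sum_(i : F) (t + i)^-1 = 0.
  by apply: (sum_inj (g := fun s => (t + s)^-1)) => x y /invr_inj /addrI.
rewrite subrr mulr0 add0r.
rewrite (bigD1 0) //= eqxx big1 ?addr0; last by move=> v /negbTE ->.
rewrite (bigD1 (- t)) //= eqxx big1 ?addr0; last by move=> v /negbTE ->.
by rewrite mulrC.
Qed.

Lemma h_lemma (u : F) :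
  \sum_(v : F) \sum_(w : F) v * w * (((u + v^-1)^-1 + w^-1)^-1) = -4 * u.
Proof.
have inner : forall t : F, \sum_(w : F) w * (t + w^-1)^-1 = 2 * t^-1 ^+ 2.
  move=> t; rewrite -g_lemma (reindex_inj invr_inj) /=.
  by apply: eq_bigr => s _; rewrite invrK.
transitivity (\sum_(v : F) v * (2 * (u + v^-1) ^+ 2)).
  apply: eq_bigr => v _; have := inner ((u + v^-1)^-1); rewrite invrK => <-.
  rewrite mulr_sumr.
  by apply: eq_bigr => w _; rewrite mulrA.
have E : forall v : F, v * (2 * (u + v^-1) ^+ 2) =
    2 * (u ^+ 2 * v) + 4 * u * (v * v^-1) + 2 * v^-1.
  move=> v; case: (eqVneq v 0) => [->|v0].
    by rewrite invr0 !mul0r !mulr0 !addr0.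
  by field.
under eq_bigr do rewrite E.
rewrite !big_split /= -!mulr_sumr sum_id sum_mulinv sum_inv.
ring.
Qed.

End Sums.

Section Lat.
Variable F : finFieldType.

Fixpoint Lnat (n : nat) (a : nat -> F) : F :=
  match n with
  | 0 => 1
  | 1 => (a 0%N)^-1
  | S (S m) => ((Lnat m a + (a m)^-1)^-1 + (a m.+1)^-1)^-1
  end.

Definition upd (b : nat -> F) (k : nat) (c : F) : nat -> F :=
  fun j => if j == k then c else b j.

Lemma Lnat_ext_aux n : (forall a b, (forall k, (k < n)%N -> a k = b k) -> Lnat n a = Lnat n b)
  /\ (forall a b, (forall k, (k < n.+1)%N -> a k = b k) -> Lnat n.+1 a = Lnat n.+1 b).
Proof.
elim: n => [|n [IH1 IH2]].
  by split => [a b _ //|a b H /=]; rewrite H.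
split => [|a b H /=]; first exact: IH2.
rewrite (IH1 a b); last by move=> k kn; apply: H; lia.
by rewrite H // H.
Qed.

Lemma Lnat_ext n a b : (forall k, (k < n)%N -> a k = b k) -> Lnat n a = Lnat n b.
Proof. exact: (Lnat_ext_aux n).1. Qed.

Lemma Lnat_inj_aux n :
  (forall b k, (k < n)%N -> injective (fun c => Lnat n (upd b k c))) /\
  (forall b k, (k < n.+1)%N -> injective (fun c => Lnat n.+1 (upd b k c))).
Proof.
elim: n => [|n [IH1 IH2]].
  split => [b k //|b k]; rewrite ltnS leqn0 => /eqP -> c1 c2 /=.
  by rewrite /upd /= => /invr_inj.
split => [|b k kn c1 c2 /=]; first exact: IH2.
rewrite /upd /=.
have [kn1|kn1] := eqVneq k n.+1.
  subst k; rewrite ?eqxx ?(gtn_eqF (ltnSn n)) ?(ltn_eqF (ltnSn n)).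
  rewrite !(@Lnat_ext n (fun j => if j == n.+1 then _ else b j) b); first last.
  - by move=> j jn; case: ifP => // /eqP; lia.
  - by move=> j jn; case: ifP => // /eqP; lia.
  by move/invr_inj/addrI/invr_inj.
have [kn0|kn0] := eqVneq k n.
  subst k; rewrite ?eqxx ?(gtn_eqF (ltnSn n)) ?(ltn_eqF (ltnSn n)).
  rewrite !(@Lnat_ext n (fun j => if j == n then _ else b j) b); first last.
  - by move=> j jn; case: ifP => // /eqP; lia.
  - by move=> j jn; case: ifP => // /eqP; lia.
  by move/invr_inj/addIr/invr_inj/addrI/invr_inj.
have kn' : (k < n)%N.
  by move: kn kn0 kn1; lia.
move/invr_inj/addIr/invr_inj/addIr.
exact: (IH1 b k kn').
Qed.

Lemma Lnat_inj n b k : (k < n)%N -> injective (fun c => Lnat n (upd b k c)).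
Proof. exact: (Lnat_inj_aux n).1. Qed.



End Lat.

Section Main.
Variable F : finFieldType.
Hypothesis hq : (3 < #|F|)%N.
Hypothesis hqz : (#|F|)%:R = 0 :> F.
Hypothesis h2 : (2 : F) != 0.
Local Notation q := #|F|.

Lemma Lnat_sum n b k : (k < n)%N -> \sum_(c : F) Lnat n (upd b k c) = 0.
Proof. by move=> kn; apply: (sum_inj hq); exact: Lnat_inj. Qed.

Definition ext n (x : 'I_n -> F) (k : nat) : F :=
  if (insub k : option 'I_n) is Some i then x i else 0.

Lemma ext_ord n (x : 'I_n -> F) (i : 'I_n) : ext x i = x i.
Proof. by rewrite /ext valK. Qed.

Lemma ext_out n (x : 'I_n -> F) k : (n <= k)%N -> ext x k = 0.
Proof. by move=> nk; rewrite /ext insubN // -leqNgt. Qed.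

Definition cf (k : nat) (a : F) : F :=
  if k == 0%N then 1 - a ^+ q.-1 else - a ^+ (q.-1 - k).

Lemma delta (a x : F) : \sum_(k < q) cf k a * x ^+ k = (x == a)%:R.
Proof.
have q0 : (0 < q)%N by lia.
have E : forall k : 'I_q, cf k a * x ^+ k = (k == Ordinal q0)%:R - a ^+ (q.-1 - k) * x ^+ k.
  move=> k; rewrite /cf; case: (eqVneq k (Ordinal q0)) => [->|k0] /=.
    by rewrite subn0 expr0 !mulr1.
  have -> : (k == 0%N :> nat) = false by apply/negbTE; move: k0; apply: contra => /eqP h; apply/eqP/val_inj.
  by rewrite mulNr sub0r.
have E2 : \sum_(k < q) cf k a * x ^+ k = 1 - \sum_(k < q) a ^+ (q.-1 - k) * x ^+ k.
  under eq_bigr do rewrite E.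
  rewrite sumrB; congr (_ - _).
  rewrite (bigD1 (Ordinal q0)) // eqxx big1 /=; first by rewrite addr0.
  by move=> k /negbTE ->.
rewrite E2.
have S := subrXX a x q.
case: (eqVneq x a) => [->|xa].
  rewrite (eq_bigr (fun _ => a ^+ q.-1)); last first.
    by move=> i _; rewrite -exprD subnK // -ltnS prednK.
  by rewrite sumr_const card_ord -[a ^+ _ *+ _]mulr_natr hqz mulr0 subr0.
rewrite !expf_card in S.
have : (a - x) * 1 = (a - x) * \sum_(i < q) a ^+ (q.-1 - i) * x ^+ i by rewrite mulr1.
move/(mulfI _) => <-; first by rewrite subrr.
by rewrite subr_eq0 eq_sym.
Qed.

Definition Lf n (a : {ffun 'I_n -> F}) : F := Lnat n (ext a).
Definition Cc n (m : {ffun 'I_n -> 'I_q}) : F :=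
  \sum_(a : {ffun 'I_n -> F}) Lf a * \prod_i cf (m i) (a i).
Definition mono n (m : {ffun 'I_n -> 'I_q}) : 'X_{1..n} := [multinom (m i : nat) | i < n].
Definition fpoly n : {mpoly F[n]} := \sum_(m : {ffun 'I_n -> 'I_q}) Cc m *: 'X_[mono m].

Lemma ext_finfun n (x : 'I_n -> F) k : ext (finfun x) k = ext x k.
Proof. by rewrite /ext; case: insub => // i; rewrite ffunE. Qed.

Lemma prod_delta n (x : 'I_n -> F) (a : {ffun 'I_n -> F}) :
  \prod_i (x i == a i)%:R = (a == finfun x)%:R :> F.
Proof.
case: (eqVneq a (finfun x)) => [->|ne].
  by rewrite big1 // => i _; rewrite ffunE eqxx.
have [i ai] : exists i, a i != x i.
  apply/existsP; apply: contraR ne => /existsPn H; apply/eqP/ffunP => i.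
  by rewrite ffunE; move: (H i); rewrite negbK => /eqP.
by rewrite (bigD1 i) //= eq_sym (negbTE ai) mul0r.
Qed.

Lemma fpoly_eval n (x : 'I_n -> F) : (fpoly n).@[x] = Lnat n (ext x).
Proof.
rewrite /fpoly raddf_sum /=.
under eq_bigr do rewrite mevalZ mevalX.
transitivity (\sum_(a : {ffun 'I_n -> F}) Lf a *
   \sum_(m : {ffun 'I_n -> 'I_q}) \prod_i (cf (m i) (a i) * x i ^+ m i)).
  transitivity (\sum_(m : {ffun 'I_n -> 'I_q}) \sum_(a : {ffun 'I_n -> F})
     Lf a * \prod_i cf (m i) (a i) * \prod_i x i ^+ m i).
    apply: eq_bigr => m _; rewrite /Cc mulr_suml; apply: eq_bigr => a _.
    by congr (_ * _); apply: eq_bigr => i _; rewrite mnmE.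
  rewrite exchange_big /=; apply: eq_bigr => a _; rewrite mulr_sumr.
  by apply: eq_bigr => m _; rewrite -mulrA -big_split.
transitivity (\sum_(a : {ffun 'I_n -> F}) Lf a * (a == finfun x)%:R).
  apply: eq_bigr => a _; congr (_ * _).
  rewrite -prod_delta -(bigA_distr_bigA (fun i (k : 'I_q) => cf k (a i) * x i ^+ k)).
  by apply: eq_bigr => i _; rewrite delta.
rewrite (bigD1 (finfun x)) //= eqxx mulr1 big1 ?addr0; last first.
  by move=> a /negbTE ->; rewrite mulr0.
by rewrite /Lf; apply: Lnat_ext => k _; rewrite ext_finfun.
Qed.

Lemma mono_inj n : injective (@mono n).
Proof.
move=> m1 m2 /mnmP H; apply/ffunP => i; apply/val_inj.
by move: (H i); rewrite !mnmE.
Qed.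

Lemma fpoly_coef n m : (fpoly n)@_(mono m) = Cc m.
Proof.
rewrite /fpoly raddf_sum /=.
under eq_bigr do rewrite mcoeffZ mcoeffX.
rewrite (bigD1 m) //= eqxx mulr1 big1 ?addr0 // => m' ne.
by rewrite (inj_eq (@mono_inj n)) (negbTE ne) mulr0.
Qed.

Lemma fpoly_coef0 n m' : (forall m, mono m != m') -> (fpoly n)@_m' = 0.
Proof.
move=> H; rewrite /fpoly raddf_sum /= big1 // => m _.
by rewrite mcoeffZ mcoeffX (negbTE (H m)) mulr0.
Qed.

Lemma fpoly_supp n m' : m' \in msupp (fpoly n) -> exists m, mono m = m'.
Proof.
rewrite mcoeff_msupp => nz.
case: (pickP (fun m => mono m == m')) => [m /eqP <-|H]; first by exists m.
by move: nz; rewrite fpoly_coef0 ?eqxx // => m; rewrite H.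
Qed.

Lemma fpoly_reduced n : reduced_mpoly (fpoly n).
Proof.
move=> m' /fpoly_supp [m <-] i; by rewrite mnmE ltn_ord.
Qed.

Lemma ext_set n (a : 'I_n -> F) (i : 'I_n) c k : (k < n)%N ->
  ext (fun j => if j == i then c else a j) k = upd (ext a) i c k.
Proof.
move=> kn; have -> : k = nat_of_ord (Ordinal kn) by [].
rewrite /upd !ext_ord; case: (eqVneq (Ordinal kn) i) => [<-|ne]; first by rewrite eqxx.
rewrite ifF //; apply: contraNF ne => /eqP h; apply/eqP/val_inj; exact: h.
Qed.

Lemma fpoly_LPP n : is_LPP (fpoly n).
Proof.
move=> i a; apply: injF_bij => c1 c2 /=; rewrite !fpoly_eval.
rewrite (Lnat_ext (b := upd (ext a) i c1)); last by move=> k kn; rewrite ext_set.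
rewrite (Lnat_ext (a := ext _) (b := upd (ext a) i c2)); last by move=> k kn; rewrite ext_set.
by move=> h; apply: (Lnat_inj (ltn_ord i) h).
Qed.

Definition setf n (a : {ffun 'I_n -> F}) (i : 'I_n) (v : F) : {ffun 'I_n -> F} :=
  finfun (fun j => if j == i then v else a j).

Lemma sum_coord n (i : 'I_n) (G : {ffun 'I_n -> F} -> F) :
  \sum_(a : {ffun 'I_n -> F}) G a = \sum_(a : {ffun 'I_n -> F} | a i == 0) \sum_(v : F) G (setf a i v).
Proof.
rewrite (partition_big (fun a : {ffun 'I_n -> F} => a i) predT) //= [RHS]exchange_big /=.
apply: eq_bigr => v _.
rewrite (reindex_onto (fun a => setf a i v) (fun a => setf a i 0)) /=; last first.
  move=> a /eqP av; apply/ffunP => j; rewrite !ffunE.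
  by case: (eqVneq j i) => [->|]; rewrite ?av.
apply: eq_bigl => b; rewrite ffunE eqxx /=.
rewrite eqxx /=.
apply/eqP/eqP => [e|b0].
  by rewrite -e ffunE eqxx.
apply/ffunP => j; rewrite !ffunE; case: (eqVneq j i) => [->|//].
by rewrite b0.
Qed.

Lemma Cc_vanish n (m : {ffun 'I_n -> 'I_q}) (i : 'I_n) : (m i : nat) = q.-1 -> Cc m = 0.
Proof.
move=> hm; rewrite /Cc (sum_coord i); apply: big1 => a _.
transitivity (\sum_(v : F) Lf (setf a i v) *
    (- \prod_(j | j != i) cf (m j) (a j))).
  apply: eq_bigr => v _; congr (_ * _).
  rewrite (bigD1 i) //= ffunE eqxx /cf hm.
  have -> : (q.-1 == 0%N) = false by apply/eqP; lia.
  rewrite subnn expr0 mulN1r; congr (- _); apply: eq_bigr => j ji.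
  by rewrite ffunE (negbTE ji).
rewrite -mulr_suml.
have -> : \sum_(v : F) Lf (setf a i v) = \sum_(v : F) Lnat n (upd (ext a) i v).
  apply: eq_bigr => v _; rewrite /Lf; apply: Lnat_ext => k kn.
  by rewrite /setf ext_finfun ext_set.
by rewrite Lnat_sum // mul0r.
Qed.

Definition T n := \sum_(a : {ffun 'I_n -> F}) Lf a * \prod_i a i.

Definition join n (y : {ffun 'I_n -> F}) (v : F) : {ffun 'I_n.+1 -> F} :=
  [ffun i : 'I_n.+1 => upd (ext y) n v i].

Lemma ext_join n (y : {ffun 'I_n -> F}) v k : ext (join y v) k = upd (ext y) n v k.
Proof.
case: (ltnP k n.+1) => kn.
  by have -> : k = nat_of_ord (Ordinal kn) by []; rewrite ext_ord ffunE.
rewrite ext_out // /upd ifF ?ext_out //; first lia.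
by apply/eqP; lia.
Qed.

Lemma sum_join n (G : {ffun 'I_n.+1 -> F} -> F) :
  \sum_x G x = \sum_(y : {ffun 'I_n -> F}) \sum_(v : F) G (join y v).
Proof.
rewrite pair_big /=.
have bij : bijective (fun p : {ffun 'I_n -> F} * F => join p.1 p.2).
  exists (fun x : {ffun 'I_n.+1 -> F} => ([ffun j : 'I_n => x (widen_ord (leqnSn n) j)], x ord_max)).
    move=> [y v] /=; congr pair.
      apply/ffunP => j; rewrite !ffunE /upd /= ifF ?ext_ord //.
      by apply/eqP => h; move: (ltn_ord j); rewrite h ltnn.
    by rewrite ffunE /upd /= eqxx.
  move=> x; apply/ffunP => i; rewrite ffunE /upd.
  case: (eqVneq (i : nat) n) => [e|ne].
    by congr (x _); apply/val_inj; rewrite /= e.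
  have ilt : (i < n)%N by move: (ltn_ord i) ne; lia.
  have -> : (i : nat) = nat_of_ord (Ordinal ilt) by [].
  by rewrite ext_ord ffunE; congr (x _); apply/val_inj.
by rewrite (reindex _ (onW_bij _ bij)).
Qed.

Lemma prod_join n (y : {ffun 'I_n -> F}) v : \prod_(i < n.+1) join y v i = (\prod_i y i) * v.
Proof.
rewrite big_ord_recr /= ffunE /upd /= eqxx; congr (_ * _).
apply: eq_bigr => i _; rewrite ffunE /upd /= ifF ?ext_ord //.
by apply/eqP => h; move: (ltn_ord i); rewrite h ltnn.
Qed.

Lemma T_rec n : T n.+2 = -4 * T n.
Proof.
rewrite /T sum_join.
rewrite (sum_join (fun y => \sum_v Lf (join y v) * \prod_i join y v i)).
rewrite mulr_sumr; apply: eq_bigr => y _.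
transitivity (\prod_i y i * \sum_(v : F) \sum_(w : F) v * w * (((Lf y + v^-1)^-1 + w^-1)^-1)).
  rewrite mulr_sumr; apply: eq_bigr => v _; rewrite mulr_sumr; apply: eq_bigr => w _.
  rewrite prod_join prod_join /Lf /=.
  rewrite !ext_join /upd eqxx ifF; last by apply/eqP; lia.
  rewrite ext_join /upd eqxx.
  rewrite (@Lnat_ext F n _ (ext y)); last first.
    move=> k kn.
    rewrite ext_join /upd ifF; last by apply/eqP; lia.
    by rewrite ext_join /upd ifF //; apply/eqP; lia.
  by rewrite mulrC -!mulrA.
by rewrite h_lemma // mulrCA [Lf y * _]mulrC.
Qed.

Lemma T0 : T 0 = 1.
Proof.
rewrite /T (eq_bigr (fun _ => 1)); last by move=> a _; rewrite big_ord0 mulr1.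
by rewrite sumr_const card_ffun card_ord expn0.
Qed.

Lemma T1 : T 1 = -1.
Proof.
rewrite /T sum_join (eq_bigr (fun _ => -1)).
  by rewrite sumr_const card_ffun card_ord expn0.
move=> y _; rewrite -(sum_mulinv hqz); apply: eq_bigr => v _.
by rewrite prod_join big_ord0 mul1r /Lf /= ext_join /upd /= mulrC.
Qed.

Lemma T_neq0 n : T n != 0.
Proof.
have h4 : (-4 : F) != 0.
  rewrite oppr_eq0; have -> : (4 : F) = 2 * 2 by rewrite -natrM.
  by rewrite mulf_neq0.
suff : T n != 0 /\ T n.+1 != 0 by case.
elim: n => [|n [IH0 IH]]; first by rewrite T0 T1 oppr_eq0 oner_eq0.
by split => //; rewrite T_rec; apply: mulf_neq0.
Qed.

Lemma fpoly_tdeg n : tdeg (fpoly n) = (n * (q - 2))%N.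
Proof.
have qm2 : (q - 2 < q)%N by lia.
pose top : {ffun 'I_n -> 'I_q} := [ffun _ => Ordinal qm2].
have Ctop : Cc top = (-1) ^+ n * T n.
  rewrite /Cc /T mulr_sumr; apply: eq_bigr => a _.
  rewrite mulrCA; congr (_ * _).
  transitivity (\prod_i - a i); last by rewrite prodrN card_ord.
  apply: eq_bigr => i _; rewrite ffunE /cf /=.
  have -> : (q - 2 == 0)%N = false by apply/eqP; lia.
  by have -> : (q.-1 - (q - 2) = 1)%N by lia.
have hs : mdeg (mono top) = (n * (q - 2))%N.
  rewrite mdegE; under eq_bigr do rewrite mnmE ffunE /=.
  by rewrite sum_nat_const card_ord.
have top_in : mono top \in msupp (fpoly n).
  by rewrite mcoeff_msupp fpoly_coef Ctop mulf_neq0 ?signr_eq0 ?T_neq0.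
have le : (msize (fpoly n) <= (n * (q - 2)).+1)%N.
  rewrite msizeE; apply/bigmax_leqP_seq => m' hm' _; rewrite ltnS.
  have [m em] := fpoly_supp hm'; subst m'.
  rewrite mdegE; under eq_bigr do rewrite mnmE.
  case: (boolP [forall i, (m i <= q - 2)%N]) => [/forallP H|/forallPn [i Hi]].
    by rewrite -[n in (_ <= n * _)%N]card_ord -sum_nat_const; apply: leq_sum => i _.
  exfalso; move: hm'; rewrite mcoeff_msupp fpoly_coef (Cc_vanish (i := i)) ?eqxx //.
  by move: Hi (ltn_ord (m i)); lia.
have ge := msize_mdeg_lt top_in; rewrite hs in ge.
by rewrite /tdeg; lia.
Qed.

End Main.

Theorem mainTheorem13 (p r n : nat) (F : finFieldType) :
  prime p -> (3 <= p)%N -> (3 < p ^ r)%N -> #|F| = (p ^ r)%N -> (1 <= n)%N ->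
  exists f : {mpoly F[n]},
    reduced_mpoly f /\ is_LPP f /\ tdeg f = (n * (p ^ r - 2))%N.
Proof.
move=> pp p3 q3 card _.
have hq : (3 < #|F|)%N by rewrite card.
have pc := card_finPcharP card pp.
have rpos : (0 < r)%N by rewrite lt0n; apply/eqP => e; move: q3; rewrite e expn0.
have hqz : (#|F|)%:R = 0 :> F by rewrite card natrX (pcharf0 pc) expr0n; case: r rpos {card q3}.
have h2 : (2 : F) != 0.
  apply/eqP => h.
  have op : odd p by case: (even_prime pp) => // p2; move: p3; rewrite p2.
  have : (p%:R : F) = 1.
    by rewrite -(odd_double_half p) op natrD -muln2 natrM h mulr0 addr0.
  by rewrite (pcharf0 pc) => /eqP; rewrite eq_sym oner_eq0.
exists (fpoly F n); split; first exact: fpoly_reduced.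
split; first exact: fpoly_LPP.
by rewrite -card fpoly_tdeg.
Qed.
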